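(* Every perfect binary tree is odd prime.
   Context: All graphs are finite and simple. A graph $G$ of order $N$ is odd prime if there is a bijection $\ell:V(G)\to\{1,3,\ldots,2N-1\}$ with $\gcd(\ell(u),\ell(v))=1$ for every edge $uv$. A perfect binary tree with $n\ge 1$ levels is a rooted tree in which every non-leaf vertex has exactly two children and all leaves lie on the same level; level $i$ has $2^{i-1}$ vertices, $1\le i\le n$. *)

(* Defs.v *)
From mathcomp Require Import all_boot.
Set Implicit Arguments. Unset Strict Implicit. Unset Printing Implicit Defensive.

(* A finite simple graph on vertex set T is given by a symmetric,
   irreflexive relation e : rel T.  Order N = #|T|. *)

(* Odd prime labeling: a bijection l from V(G) onto {1,3,...,2N-1}
   (stated as: l injective, and its image is exactly the set of odd
   numbers < 2N) such that adjacent vertices get coprime labels. *)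
Definition odd_prime (T : finType) (e : rel T) : Prop :=
  exists l : T -> nat,
    injective l /\
    (forall k, (odd k && (k < 2 * #|T|)) <-> (exists v, l v = k)) /\
    (forall u v, e u v -> coprime (l u) (l v)).

(* Perfect binary tree with n levels, vertices 0 .. 2^n - 2 in heap
   (level-order) numbering: vertex i has children 2i+1 and 2i+2 (when
   these are < 2^n - 1); vertex 0 is the root, level k (1-based) consists
   of vertices 2^(k-1)-1 .. 2^k - 2, i.e. 2^(k-1) vertices. *)
Definition pbt_vertex (n : nat) := 'I_(2 ^ n - 1).

Definition pbt_edge (n : nat) : rel (pbt_vertex n) :=
  fun i j => [|| val j == (val i).*2.+1, val j == (val i).*2.+2,
                 val i == (val j).*2.+1 | val i == (val j).*2.+2].

Lemma pbt_edge_sym n : symmetric (@pbt_edge n).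
Proof. by move=> i j; rewrite /pbt_edge; do 4 case: (_ == _). Qed.

(* Main.v *)
Require Import Defs.
From mathcomp Require Import all_boot zify.
Set Implicit Arguments. Unset Strict Implicit.

Definition g (n m : nat) : nat :=
  (2 * (m - 2 ^ trunc_log 2 m) + 1) * 2 ^ (n.-1 - trunc_log 2 m).

Lemma gE n d x : x < 2 ^ d -> g n (2 ^ d + x) = (2 * x + 1) * 2 ^ (n.-1 - d).
Proof.
move=> hx; rewrite /g (@trunc_log_eq 2 d) //; first by rewrite addKn.
by rewrite leq_addr /= expnS; lia.
Qed.

Lemma decomp m : 0 < m -> exists d x, [/\ x < 2 ^ d & m = 2 ^ d + x].
Proof.
move=> m0; exists (trunc_log 2 m), (m - 2 ^ trunc_log 2 m).
have h1 := trunc_logP (isT : 1 < 2) m0.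
have h2 := trunc_log_ltn m (isT : 1 < 2).
rewrite expnS in h2; split; lia.
Qed.

Lemma odd_mul2 a b e f : odd a -> odd b -> a * 2 ^ e = b * 2 ^ f -> e = f /\ a = b.
Proof.
wlog le_ef : a b e f / e <= f.
  move=> H oa ob eq; case: (leqP e f) => h; first exact: H.
  by have [-> ->] := H b a f e (ltnW h) ob oa (esym eq).
move=> oa ob; set k := f - e; have -> : f = e + k by rewrite subnKC.
rewrite expnD (mulnC (2 ^ e)) mulnA => /eqP; rewrite eqn_pmul2r ?expn_gt0 // => /eqP Ha.
move: oa; rewrite Ha oddM oddX /= ob /= orbF => /eqP k0.
by rewrite k0 addn0 expn0 muln1.
Qed.

Lemma coprime_add_pow a k : odd a -> coprime a (a + 2 ^ k).
Proof.
by move=> oa; rewrite /coprime gcdnDl -/(coprime _ _) coprimeXr // coprimen2.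
Qed.

Lemma count_odd N : count odd (iota 0 (2 * N)) = N.
Proof.
elim: N => // N IH.
by rewrite mulnS addnC iotaD count_cat IH /= add0n; case: odd; rewrite /= ?addn0 ?addn1.
Qed.

Lemma lt_exp_d d n x : 2 ^ d + x < 2 ^ n -> d < n.
Proof.
move=> h; rewrite -(@ltn_exp2l 2) //; exact: leq_ltn_trans (leq_addr _ _) h.
Qed.

Lemma g_range n m : 0 < m < 2 ^ n -> 0 < g n m < 2 ^ n.
Proof.
case/andP=> m0 mn; have [d [x [xd Em]]] := decomp m0.
rewrite Em in mn *; have dn := lt_exp_d mn.
rewrite gE // muln_gt0 addn1 expn_gt0 /=.
have -> : 2 ^ n = 2 ^ d.+1 * 2 ^ (n.-1 - d) by rewrite -expnD; congr (2 ^ _); lia.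
by rewrite ltn_pmul2r ?expn_gt0 // expnS; lia.
Qed.

Lemma g_inj n m m' : 0 < m < 2 ^ n -> 0 < m' < 2 ^ n -> g n m = g n m' -> m = m'.
Proof.
case/andP=> m0 mn; case/andP=> m0' mn'.
have [d [x [xd Em]]] := decomp m0; have [d' [x' [xd' Em']]] := decomp m0'.
rewrite Em Em' in mn mn' *; have dn := lt_exp_d mn; have dn' := lt_exp_d mn'.
rewrite !gE // => /odd_mul2 [] ; rewrite ?addn1 /= ?oddM ?andbF //.
move=> hd hx; have ed : d = d' by lia.
by subst d'; lia.
Qed.

Lemma odd2m1 a : 0 < a -> odd (2 * a - 1).
Proof. by case: a => // a _; rewrite mulnS /= add0n oddM. Qed.

Definition lab n (i : nat) := 2 * g n i.+1 - 1.

Lemma lab_child n i j : j < 2 ^ n - 1 -> (j = 2 * i + 1 \/ j = 2 * i + 2) ->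
  coprime (lab n i) (lab n j).
Proof.
move=> jn hj.
have [d [x [xd Em]]] := decomp (ltn0Sn i).
have [b [b01 Ej]] : exists b, b < 2 /\ j.+1 = 2 ^ d.+1 + (2 * x + b).
  by case: hj => ->; [exists 0 | exists 1]; rewrite expnS; lia.
have hxd : 2 * x + b < 2 ^ d.+1 by rewrite expnS; lia.
have dn := @lt_exp_d d.+1 n (2 * x + b) ltac:(lia).
rewrite /lab Em Ej !gE //.
have -> : n.-1 - d = (n.-1 - d.+1).+1 by lia.
rewrite expnS; move: (n.-1 - d.+1) => e.
have P0 : 0 < 2 ^ e by rewrite expn_gt0.
case: b b01 {Ej hxd} => [|[|//]] _.
  have -> : 2 * ((2 * x + 1) * (2 * 2 ^ e)) - 1 = (2 * ((2 * (2 * x + 0) + 1) * 2 ^ e) - 1) + 2 ^ e.+1.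
    rewrite expnS; nia.
  rewrite coprime_sym; apply: coprime_add_pow.
by apply: odd2m1; rewrite muln_gt0 addn1.
have -> : 2 * ((2 * (2 * x + 1) + 1) * 2 ^ e) - 1 = (2 * ((2 * x + 1) * (2 * 2 ^ e)) - 1) + 2 ^ e.+1.
  rewrite expnS; nia.
apply: coprime_add_pow.
by apply: odd2m1; rewrite !muln_gt0 addn1.
Qed.

Lemma lab_facts n i : i < 2 ^ n - 1 -> [/\ 0 < g n i.+1, g n i.+1 < 2 ^ n,
  odd (lab n i) & lab n i < 2 * (2 ^ n - 1)].
Proof.
move=> hi; have /andP [h1 h2] : 0 < g n i.+1 < 2 ^ n by apply: g_range; lia.
by split => //; [apply: odd2m1 | rewrite /lab; lia].
Qed.

Theorem theorem4p3 (n : nat) : 1 <= n -> odd_prime (@pbt_edge n).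
Proof.
move=> n1; exists (fun v : pbt_vertex n => lab n (val v)).
have cardT : #|pbt_vertex n| = 2 ^ n - 1 by rewrite card_ord.
have linj : injective (fun v : pbt_vertex n => lab n (val v)).
  move=> [a ha] [b hb] /= eq; apply: val_inj => /=.
  have [a1 a2 _ _] := lab_facts ha; have [b1 b2 _ _] := lab_facts hb.
  move: eq; rewrite /lab => eq; apply/succn_inj.
  apply: (g_inj (n := n)); rewrite ?ltn0Sn /=; lia.
split => //; split.
- move=> k; split.
  + case/andP=> ok kN.
    set s1 := map (fun v : pbt_vertex n => lab n (val v)) (enum (pbt_vertex n)).
    set s2 := filter odd (iota 0 (2 * #|pbt_vertex n|)).
    have U : uniq s1 by rewrite map_inj_uniq // enum_uniq.
    have S : {subset s1 <= s2}.
      move=> y /mapP [v _ ->]; have [_ _ o lt] := lab_facts (ltn_ord v).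
      by rewrite mem_filter o mem_iota add0n cardT.
    have Z : size s2 <= size s1 by rewrite size_filter count_odd size_map -cardE.
    have [_ e12] := uniq_min_size U S Z.
    have : k \in s2 by rewrite mem_filter ok mem_iota.
    by rewrite -e12 => /mapP [v _ ->]; exists v.
  + case=> v <-; have [_ _ o lt] := lab_facts (ltn_ord v).
    by rewrite o cardT.
- move=> u v; rewrite /pbt_edge.
  case/or4P => /eqP h.
  + by apply: lab_child; [exact: ltn_ord | left; rewrite h; lia].
  + by apply: lab_child; [exact: ltn_ord | right; rewrite h; lia].
  + by rewrite coprime_sym; apply: lab_child; [exact: ltn_ord | left; rewrite h; lia].
  + by rewrite coprime_sym; apply: lab_child; [exact: ltn_ord | right; rewrite h; lia].
Qed.
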